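(* Let $\rho$ and $\sigma$ be positive definite density matrices on a $d$-dimensional complex Hilbert space, and let $\alpha>1$. Define the R\'enyi relative entropy $D_\alpha(\rho\|\sigma)=\frac{1}{\alpha-1}\log\mathrm{tr}\,[\rho^\alpha\sigma^{1-\alpha}]$. Then \[ D_\alpha(\rho\|\sigma)\ \ge\ \frac{1}{\alpha-1}\Big(\log d+\frac{\alpha}{d}\log\det(\rho)+\frac{1-\alpha}{d}\log\det(\sigma)\Big). \]
   Context: A density matrix is a Hermitian positive semidefinite matrix with trace $1$. Real powers of positive definite matrices are defined by functional calculus. $\log$ denotes the logarithm to a fixed base greater than $1$. *)

(* Defs.v *)
From HB Require Import structures.
From mathcomp Require Import all_boot all_order all_algebra.
From mathcomp Require Import complex.
From mathcomp Require Import boolp reals exp.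
Set Implicit Arguments.
Unset Strict Implicit.
Unset Printing Implicit Defensive.
Import Order.TTheory GRing.Theory Num.Theory.
Local Open Scope ring_scope.
Local Open Scope sesquilinear_scope.

Section QDefs.
Variable R : realType.
Local Notation C := R[i].

Definition adjmx (m n : nat) (A : 'M[C]_(m, n)) : 'M[C]_(n, m) := A ^t*.

Definition hermitian (d : nat) (A : 'M[C]_d) : Prop := adjmx A = A.

(* positive definite: Hermitian and <v, A v> > 0 for every nonzero v
   (here with row vectors: v A v^* ; 0 < z in C means z real and > 0) *)
Definition posdef (d : nat) (A : 'M[C]_d) : Prop :=
  hermitian A /\ forall v : 'rV[C]_d, v != 0 -> 0 < (v *m A *m adjmx v) 0 0.

Definition posdef_density (d : nat) (A : 'M[C]_d) : Prop :=
  posdef A /\ \tr A = 1.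

Definition pos_spectral_decomp (d : nat) (A : 'M[C]_d)
    (U : 'M[C]_d) (l : 'rV[R]_d) : Prop :=
  U \is unitarymx /\ (forall i, 0 < l 0 i) /\
  A = adjmx U *m diag_mx (\row_i ((l 0 i)%:C)%C) *m U.

(* real power A^t of a positive definite matrix, by functional calculus:
   A^t = U^* diag(l_i^t) U for a spectral decomposition of A
   (independent of the chosen decomposition); 0 if A has none. *)
Definition mpow (d : nat) (A : 'M[C]_d) (t : R) : 'M[C]_d :=
  match pselect (exists p : 'M[C]_d * 'rV[R]_d, pos_spectral_decomp A p.1 p.2) with
  | left h => let p := projT1 (cid h) in
              adjmx p.1 *m diag_mx (\row_i ((powR (p.2 0 i) t)%:C)%C) *m p.1
  | right _ => 0
  end.

Definition logb (b x : R) : R := ln x / ln b.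

(* Renyi relative entropy D_alpha(rho || sigma) = 1/(alpha-1) log tr[rho^alpha sigma^(1-alpha)];
   the trace is real (positive) for positive definite rho, sigma, we take its real part *)
Definition renyi_D (b alpha : R) (d : nat) (rho sigma : 'M[C]_d) : R :=
  (alpha - 1)^-1 *
    logb b (complex.Re (\tr (mpow rho alpha *m mpow sigma (1 - alpha)))).

End QDefs.

(* Main.v *)
Require Import Defs.
From HB Require Import structures.
From mathcomp Require Import all_boot all_order all_algebra.
From mathcomp Require Import complex.
From mathcomp Require Import boolp reals exp.
From mathcomp Require Import ring lra.
Import Order.TTheory GRing.Theory Num.Theory.
Local Open Scope ring_scope.

Module Aux.
Set Implicit Arguments.
Unset Strict Implicit.
Local Open Scope sesquilinear_scope.
Section S.
Variable R : realType.
Local Notation C := R[i].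



Lemma adjmxM m n p (A : 'M[C]_(m, n)) (B : 'M[C]_(n, p)) :
  adjmx (A *m B) = adjmx B *m adjmx A.
Proof. by rewrite /adjmx trmx_mul map_mxM. Qed.

Lemma adjmx_delta n (i : 'I_n) : adjmx (delta_mx 0 i : 'rV[C]_n) = delta_mx i 0.
Proof.
apply/matrixP => a b; rewrite !mxE.
by case: (a == i); case: (b == 0); rewrite /= ?conjC0 ?conjC1.
Qed.

Lemma posdef_spectral d (A : 'M[C]_d) : posdef A ->
  exists p : 'M[C]_d * 'rV[R]_d, pos_spectral_decomp A p.1 p.2.
Proof.
move=> [hA pA].
have nA : A \is normalmx.
  have hA' : A^t* = A := hA.
  by rewrite qualifE hA'.
have Ae := orthomx_spectralP nA.
set U := spectralmx A in Ae; set sp := spectral_diag A in Ae.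
have Uu : U \is unitarymx by apply: spectral_unitarymx.
rewrite invmx_unitary // in Ae.
have spos : forall i, 0 < sp 0 i.
  move=> i.
  have vn : (delta_mx 0 i : 'rV[C]_d) *m U != 0.
    apply/eqP => h.

    have : ((delta_mx 0 i : 'rV[C]_d) *m U *m U^t*) 0 i = 0 by rewrite h !mul0mx mxE.
    by rewrite mulmxtVK // mxE !eqxx /= => /eqP; rewrite oner_eq0.
  have := pA _ vn; rewrite adjmxM adjmx_delta Ae.
  have UU : U *m U^t* = 1%:M by apply/unitarymxP.
  rewrite -!mulmxA (mulmxA U) UU mul1mx !mulmxA.
  rewrite -(mulmxA _ U) /adjmx UU mulmx1.
  rewrite mul_mx_diag mxE.
  rewrite (bigD1 i) //= big1 ?addr0; first by rewrite !mxE !eqxx mulr1 mul1r.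
  by move=> j ji; rewrite !mxE (negbTE ji) andbF mulr0.
exists (U, \row_i complex.Re (sp 0 i)); split => //=; split.
  move=> i; rewrite mxE; have := spos i; rewrite ltcE => /andP[_]; by [].
rewrite /adjmx {1}Ae; congr (_ *m _ *m _); congr diag_mx.
apply/rowP => i; rewrite !mxE.
have := spos i; rewrite ltcE => /andP[/eqP H _].
move: H; case: (sp 0 i) => a b /= ->. by [].
Qed.





Lemma ge0_realC {z : C} : 0 <= z -> z = (complex.Re z)%:C%C.
Proof. by rewrite lecE => /andP[/eqP H _]; move: H; case: z => a b /= ->. Qed.

Definition pw d (W : 'M[C]_d) (i j : 'I_d) : R := complex.Re (W i j * ((W i j)^*)%R).

Arguments pw {d}.
Lemma pw_ge0 d (W : 'M[C]_d) i j : 0 <= pw W i j.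
Proof. by have := mul_conjC_ge0 (W i j); rewrite lecE => /andP[_]. Qed.

Lemma pw_row d (W : 'M[C]_d) i : W \is unitarymx -> \sum_j pw W i j = 1.
Proof.
move=> /unitarymxP WW.
have := congr1 (fun M : 'M[C]_d => complex.Re (M i i)) WW.
rewrite /= !mxE eqxx /= raddf_sum /= => <-.
by apply: eq_bigr => j _; rewrite !mxE.
Qed.

Lemma pw_col d (W : 'M[C]_d) j : W \is unitarymx -> \sum_i pw W i j = 1.
Proof.
rewrite -trmxC_unitary => /unitarymxP; rewrite trmxCK => WW.
have := congr1 (fun M : 'M[C]_d => complex.Re (M j j)) WW.
rewrite /= !mxE eqxx /= raddf_sum /= => <-.
by apply: eq_bigr => i _; rewrite !mxE mulrC.
Qed.

Lemma trace_formula d (U V : 'M[C]_d) (a b : 'I_d -> R) :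
  complex.Re (\tr ((adjmx U *m diag_mx (\row_i (a i)%:C%C) *m U) *m
                   (adjmx V *m diag_mx (\row_i (b i)%:C%C) *m V)))
  = \sum_i \sum_j a i * b j * pw (U *m adjmx V) i j.
Proof.
set W := U *m adjmx V.
have -> : \tr ((adjmx U *m diag_mx (\row_i (a i)%:C%C) *m U) *m
                   (adjmx V *m diag_mx (\row_i (b i)%:C%C) *m V)) =
   \tr (diag_mx (\row_i (a i)%:C%C) *m W *m diag_mx (\row_i (b i)%:C%C) *m adjmx W).
  rewrite /W adjmxM /adjmx trmxCK -!mulmxA mxtrace_mulC -!mulmxA. by [].
clearbody W.
rewrite /mxtrace raddf_sum /=; apply: eq_bigr => i _.
rewrite mxE raddf_sum /=; apply: eq_bigr => j _.
rewrite mul_mx_diag mul_diag_mx !mxE /pw.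
have -> : (a i)%:C%C * W i j * (b j)%:C%C * ((W i j)^*)%R = (a i)%:C%C * (b j)%:C%C * (W i j * ((W i j)^*)%R).
  by rewrite -!mulrA; congr (_ * _); rewrite mulrCA.
rewrite (ge0_realC (mul_conjC_ge0 (W i j))).
by rewrite -!rmorphM.
Qed.



Lemma ln_le_sub1 (y : R) : 0 < y -> ln y <= y - 1.
Proof.
move=> y0; have := @le_ln1Dx R (y - 1).
rewrite (addrC 1) subrK; apply; by rewrite ltrBrDl subrr.
Qed.

Lemma jensen_ln d (a b : 'I_d -> R) (p : 'I_d -> 'I_d -> R) : (0 < d)%N ->
  (forall i, 0 < a i) -> (forall j, 0 < b j) -> (forall i j, 0 <= p i j) ->
  (forall i, \sum_j p i j = 1) -> (forall j, \sum_i p i j = 1) ->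
  ln d%:R + (\sum_i ln (a i) + \sum_j ln (b j)) / d%:R
    <= ln (\sum_i \sum_j a i * b j * p i j).
Proof.
move=> d0 a0 b0 p0 prow pcol.
set T := \sum_i \sum_j a i * b j * p i j.
have sp : \sum_i \sum_j p i j = d%:R.
  by rewrite (eq_bigr (fun _ => 1)) // sumr_const card_ord.
have dp : 0 < d%:R :> R by rewrite ltr0n.
have T0 : 0 < T.
  rewrite lt_def sumr_ge0 ?andbT; last first.
    by move=> i _; apply: sumr_ge0 => j _; rewrite !mulr_ge0 // ltW.
  apply/eqP => /eqP; rewrite psumr_eq0; last first.
    by move=> i _; apply: sumr_ge0 => j _; rewrite !mulr_ge0 // ltW.
  move=> /allP /(_ (Ordinal d0)) /=; rewrite mem_index_enum => /(_ isT).
  rewrite psumr_eq0; last by move=> j _; rewrite !mulr_ge0 // ltW.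
  move=> /allP H.
  have : \sum_j p (Ordinal d0) j = 0.
    apply: big1 => j _; have := H j; rewrite mem_index_enum => /(_ isT) /eqP.
    move/eqP; rewrite !mulf_eq0 => /orP[/orP[]|/eqP //].
      by rewrite gt_eqF.
    by rewrite gt_eqF.
  by rewrite prow => /eqP; rewrite oner_eq0.
set S := T / d%:R.
have S0 : 0 < S by rewrite divr_gt0.
have key : \sum_i \sum_j p i j * (ln (a i * b j) - ln S)
        <= \sum_i \sum_j p i j * (a i * b j / S - 1).
  apply: ler_sum => i _; apply: ler_sum => j _; apply: ler_wpM2l => //.
  rewrite -ln_div; first (apply: ln_le_sub1; exact: divr_gt0 (mulr_gt0 (a0 i) (b0 j)) S0).
    by rewrite posrE mulr_gt0.
  by rewrite posrE.
have R1 : \sum_i \sum_j p i j * (a i * b j / S - 1) = 0.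
  under eq_bigr do under eq_bigr do rewrite mulrBr mulr1.
  under eq_bigr do rewrite sumrB.
  rewrite sumrB sp.
  have -> : \sum_i \sum_j p i j * (a i * b j / S) = T / S.
    rewrite /T mulr_suml; apply: eq_bigr => i _; rewrite mulr_suml.
    apply: eq_bigr => j _; ring.
  have -> : T / S = d%:R by rewrite /S; field; rewrite !gt_eqF.
  by rewrite subrr.
have L1 : \sum_i \sum_j p i j * (ln (a i * b j) - ln S)
     = (\sum_i ln (a i) + \sum_j ln (b j)) - d%:R * ln S.
  under eq_bigr do under eq_bigr do rewrite mulrBr lnM ?posrE // mulrDr.
  under eq_bigr do rewrite sumrB big_split.
  rewrite sumrB big_split /=.
  have -> : \sum_i \sum_j p i j * ln S = d%:R * ln S.
    by rewrite -sp mulr_suml; apply: eq_bigr => i _; rewrite mulr_suml.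
  congr (_ + _ - _).
    by apply: eq_bigr => i _; rewrite -mulr_suml prow mul1r.
  rewrite exchange_big /=.
  by apply: eq_bigr => j _; rewrite -mulr_suml pcol mul1r.
move: key; rewrite R1 L1 subr_le0 => key.
have -> : ln T = ln d%:R + ln S.
  by rewrite -lnM ?posrE // /S mulrC divfK // gt_eqF.
rewrite lerD2l ler_pdivrMr // mulrC //.
Qed.

Lemma mpow_spec d (A : 'M[C]_d) t : posdef A -> exists U l,
  pos_spectral_decomp A U l /\
  mpow A t = adjmx U *m diag_mx (\row_i ((powR (l 0 i) t)%:C)%C) *m U.
Proof.
move=> pA; rewrite /mpow; case: pselect => [h|h].
  exists (projT1 (cid h)).1, (projT1 (cid h)).2; split => //.
  exact: (projT2 (cid h)).
by exfalso; apply: h; apply: posdef_spectral.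
Qed.

Lemma det_spec d (A U : 'M[C]_d) l : pos_spectral_decomp A U l ->
  complex.Re (\det A) = \prod_i l 0 i.
Proof.
move=> [Uu [_ ->]].
have UU : adjmx U *m U = 1%:M.
  by move: Uu; rewrite -trmxC_unitary => /unitarymxP; rewrite trmxCK.
rewrite !det_mulmx mulrAC -det_mulmx UU det1 mul1r det_diag.
rewrite (eq_bigr (fun i => (l 0 i)%:C%C)); last by move=> i _; rewrite mxE.
by rewrite -rmorph_prod.
Qed.

Lemma ln_prod_seq (I : Type) (s : seq I) (f : I -> R) : (forall i, 0 < f i) ->
  ln (\prod_(i <- s) f i) = \sum_(i <- s) ln (f i).
Proof.
move=> f0; elim: s => [|x s IH]; first by rewrite !big_nil ln1.
rewrite !big_cons lnM ?IH // posrE //; exact: prodr_gt0.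
Qed.
Lemma final_ineq (b alpha : R) d (T : R) (x y : 'I_d -> R) :
  1 < b -> 1 < alpha -> (0 < d)%N -> (forall i, 0 < x i) -> (forall j, 0 < y j) ->
  ln d%:R + (\sum_i ln (powR (x i) alpha) + \sum_j ln (powR (y j) (1 - alpha))) / d%:R
    <= ln T ->
  (alpha - 1)^-1 * (logb b d%:R + alpha / d%:R * logb b (\prod_i x i)
     + (1 - alpha) / d%:R * logb b (\prod_i y i)) <= (alpha - 1)^-1 * logb b T.
Proof.
move=> b1 a1 d0 x0 y0 J.
apply: ler_wpM2l; first by rewrite invr_ge0 subr_ge0 ltW.
have lb : 0 < ln b by apply: ln_gt0.
rewrite /logb (ln_prod_seq _ x0) (ln_prod_seq _ y0).
have E1 : \sum_i ln (powR (x i) alpha) = alpha * \sum_i ln (x i).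
  by rewrite mulr_sumr; apply: eq_bigr => i _; rewrite ln_powR.
have E2 : \sum_i ln (powR (y i) (1 - alpha)) = (1 - alpha) * \sum_i ln (y i).
  by rewrite mulr_sumr; apply: eq_bigr => i _; rewrite ln_powR.
rewrite E1 E2 in J.
apply: le_trans (_ : (ln d%:R + (alpha * \sum_i ln (x i) +
   (1 - alpha) * \sum_j ln (y j)) / d%:R) / ln b <= _); last first.
  by rewrite ler_pM2r ?invr_gt0.
have dn : d%:R != 0 :> R by rewrite pnatr_eq0 -lt0n.
rewrite le_eqVlt; apply/orP; left; apply/eqP.
field.
by rewrite dn gt_eqF.
Qed.
End S.
End Aux.
Import Aux.

Theorem mainTheorem5 (R : realType) (b : R) (hb : 1 < b) (d : nat)
  (rho sigma : 'M[R[i]]_d) (alpha : R) :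
  posdef_density rho -> posdef_density sigma -> 1 < alpha ->
  renyi_D b alpha rho sigma >=
    (alpha - 1)^-1 *
      (logb b d%:R
       + alpha / d%:R * logb b (complex.Re (\det rho))
       + (1 - alpha) / d%:R * logb b (complex.Re (\det sigma))).
Proof.
move=> [pr tr_r] [ps tr_s] a1.
have d0 : (0 < d)%N.
  case: d rho tr_r {pr sigma ps tr_s} => // rho'.
  by rewrite /mxtrace big_ord0 => /eqP; rewrite eq_sym oner_eq0.
have [U [l [sU EU]]] := mpow_spec alpha pr.
have [V [m [sV EV]]] := mpow_spec (1 - alpha) ps.
rewrite /renyi_D EU EV trace_formula (det_spec sU) (det_spec sV).
have [Uu [l0 _]] := sU; have [Vu [m0 _]] := sV.
have Wu : U *m adjmx V \is unitarymx.
  by apply: mul_unitarymx => //; rewrite /adjmx trmxC_unitary.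
apply: (final_ineq hb a1 d0 l0 m0).
exact: (@jensen_ln R d (fun i => powR (l 0 i) alpha) (fun j => powR (m 0 j) (1 - alpha)) _
  d0 (fun i => powR_gt0 _ (l0 i)) (fun j => powR_gt0 _ (m0 j))
  (pw_ge0 (U *m adjmx V)) (fun i => pw_row i Wu) (fun j => pw_col j Wu)).
Qed.
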